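(* Fix an instance of MCND and a partial aggregation $\mathcal{B}$ (see context). (i) If $(x,y,z)$ is a feasible solution of the LP relaxation of the PAe formulation built on $\mathcal{B}$, then $(x,y)$ is a feasible solution of the LP relaxation of the PAi formulation built on the same $\mathcal{B}$ (with the same objective value). (ii) The converse fails in general: there exist an instance and a partial aggregation $\mathcal{B}$ for which the LP relaxation of PAi has a feasible solution $(x,y)$ such that there is no $z$ making $(x,y,z)$ feasible for the LP relaxation of PAe. (That is, PAe is stronger than PAi.)
   Context: An instance of MCND consists of a directed graph $G=(\mathcal{N},\mathcal{A})$, a finite set $\mathcal{K}$ of commodities, each $k\in\mathcal{K}$ having an origin $o^k\in\mathcal{N}$, a destination $s^k\in\mathcal{N}$ and a demand $d^k\ge 0$, and for each arc $(i,j)\in\mathcal{A}$ a capacity $u_{ij}$, a per-unit flow cost $c_{ij}$ and a fixed cost $f_{ij}$, all nonnegative. Let $o_i^k=1$ if $i=o^k$ and $0$ otherwise, $s_i^k=1$ if $i=s^k$ and $0$ otherwise, $\mathcal{N}_i^+=\{j:(i,j)\in\mathcal{A}\}$, $\mathcal{N}_i^-=\{j:(j,i)\in\mathcal{A}\}$. Dispersion: a nonempty set $\mathcal{K}_b\subseteq\mathcal{K}$ of commodities sharing a common origin, together with, for every arc $(i,j)\in\mathcal{A}$, a partition of $\mathcal{K}_b$ into $\mathcal{K}_b^{ij}$ (aggregated on $(i,j)$) and $\mathcal{D}_b^{ij}$ (disaggregated on $(i,j)$); either part may be empty. Let $\mathcal{G}_b^{ij}$ be the family consisting of the set $\mathcal{K}_b^{ij}$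 (if nonempty) together with the singletons $\{k\}$, $k\in\mathcal{D}_b^{ij}$. A partial aggregation is a set $\mathcal{B}$ of dispersions such that every $k\in\mathcal{K}$ lies in $\mathcal{K}_b$ for exactly one $b\in\mathcal{B}$. LP relaxation of PA (for $\mathcal{B}$): variables $x_{ij}^D\ge0$ for $(i,j)\in\mathcal{A}$, $b\in\mathcal{B}$, $D\in\mathcal{G}_b^{ij}$ (since the $\mathcal{K}_b$ are disjoint, $D$ determines $b$), and $0\le y_{ij}\le1$; minimize $\sum_{(i,j)}c_{ij}\sum_{b}\sum_{D\in\mathcal{G}_b^{ij}}x_{ij}^D+\sum_{(i,j)}f_{ij}y_{ij}$ subject to: for all $b\in\mathcal{B}$, $i\in\mathcal{N}$: $\sum_{j\in\mathcal{N}_i^+}\sum_{D\in\mathcal{G}_b^{ij}}x_{ij}^D-\sum_{j\in\mathcal{N}_i^-}\sum_{D\in\mathcal{G}_b^{ji}}x_{ji}^D=\sum_{k\in\mathcal{K}_b}(o_i^k-s_i^k)d^k$; for all $(i,j)$: $\sum_b\sum_{D\in\mathcal{G}_b^{ij}}x_{ij}^D\le u_{ij}y_{ij}$; for all $(i,j),b,D\in\mathcal{G}_b^{ij}$: $x_{ij}^D\le(\sum_{k\in D}d^k)y_{ij}$. LP relaxation of PAi: the PA LP plus, for all $b\in\mathcal{B}$, $k\in\mathcal{K}_b$, $i\in\mathcal{N}$: $\sum_{j\in\mathcal{N}_i^+}\sum_{D\in\mathcal{G}_b^{ij}:k\in D}x_{ij}^D-\sum_{j\in\mathcal{N}_i^-}\sum_{D\in\mathcal{G}_b^{ji}:D=\{k\}}x_{ji}^D\ge(o_i^k-s_i^k)d^k$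 and $\sum_{j\in\mathcal{N}_i^+}\sum_{D\in\mathcal{G}_b^{ij}:D=\{k\}}x_{ij}^D-\sum_{j\in\mathcal{N}_i^-}\sum_{D\in\mathcal{G}_b^{ji}:k\in D}x_{ji}^D\le(o_i^k-s_i^k)d^k$. LP relaxation of PAe: the PA LP plus the following. For $b\in\mathcal{B}$, $i\in\mathcal{N}$ let $\mathcal{L}_b^i=\{k\in\mathcal{K}_b:k\in\mathcal{D}_b^{ji}\text{ for some }j\in\mathcal{N}_i^-\text{ or }k\in\mathcal{D}_b^{ij}\text{ for some }j\in\mathcal{N}_i^+\}$; $\mathcal{M}_b^i=\{\{k\}:k\in\mathcal{L}_b^i\}\cup\{\mathcal{K}_b\setminus\mathcal{L}_b^i\}$ (the last set only if nonempty); $\check{\mathcal{T}}_b^i$ = the set of distinct nonempty sets among $\{\mathcal{K}_b^{ji}:j\in\mathcal{N}_i^-\}$; $\hat{\mathcal{T}}_b^i$ = the set of distinct nonempty sets among $\{\mathcal{K}_b^{ij}:j\in\mathcal{N}_i^+\}$. For every $(b,i)$ with $\mathcal{L}_b^i\neq\emptyset$ add variables $z_{CD}^{ib}\ge0$ for $C\in\check{\mathcal{T}}_b^i$, $D\in\mathcal{M}_b^i$ with $C\cap D\ne\emptyset$, and $z_{DC}^{ib}\ge0$ for $D\in\mathcal{M}_b^i$, $C\in\hat{\mathcal{T}}_b^i$ with $C\cap D\neq\emptyset$ (zero cost), and constraints: for each $D\in\mathcal{M}_b^i$: $\sum_{j\in\mathcal{N}_i^+:\,D=\{k\},k\in\mathcal{D}_b^{ij}}x_{ij}^{D}-\sum_{j\in\mathcal{N}_i^-:\,D=\{k\},k\in\mathcal{D}_b^{ji}}x_{ji}^{D}+\sum_{C\in\hat{\mathcal{T}}_b^i:C\cap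 D\neq\emptyset}z_{DC}^{ib}-\sum_{C\in\check{\mathcal{T}}_b^i:C\cap D\ne\emptyset}z_{CD}^{ib}=\sum_{k\in D}(o_i^k-s_i^k)d^k$; for each $C\in\check{\mathcal{T}}_b^i$: $\sum_{D\in\mathcal{M}_b^i:C\cap D\ne\emptyset}z_{CD}^{ib}-\sum_{j\in\mathcal{N}_i^-:\mathcal{K}_b^{ji}=C}x_{ji}^C=0$; for each $C\in\hat{\mathcal{T}}_b^i$: $\sum_{j\in\mathcal{N}_i^+:\mathcal{K}_b^{ij}=C}x_{ij}^C-\sum_{D\in\mathcal{M}_b^i:C\cap D\neq\emptyset}z_{DC}^{ib}=0$. The objective is that of PA. *)

(* Defs.v *)
From HB Require Import structures.
From mathcomp Require Import all_boot all_order all_algebra.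
From mathcomp Require Import reals.
Set Implicit Arguments. Unset Strict Implicit. Unset Printing Implicit Defensive.
Import Order.TTheory GRing.Theory Num.Theory.
Local Open Scope ring_scope.

(* An MCND instance: directed graph (node, arc) without parallel arcs
   (arcs are pairs (i,j) with arc i j), commodities with origin, destination,
   nonnegative demand; nonnegative capacity, unit flow cost and fixed cost on arcs. *)
Record mcnd (R : numDomainType) := Mcnd {
  node : finType;
  comm : finType;
  arc : rel node;
  orig : comm -> node;
  dest : comm -> node;
  dem : comm -> R;
  cap : node -> node -> R;
  ccost : node -> node -> R;
  fcost : node -> node -> R;
  dem_ge0 : forall k, 0 <= dem k;
  cap_ge0 : forall i j, arc i j -> 0 <= cap i j;
  ccost_ge0 : forall i j, arc i j -> 0 <= ccost i j;
  fcost_ge0 : forall i j, arc i j -> 0 <= fcost i j }.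

(* A partial aggregation: a family of dispersions indexed by bidx.
   Kb b = K_b; Dis b i j = D_b^{ij} (disaggregated on (i,j));
   the aggregated part is K_b^{ij} = Kb b :\: Dis b i j. *)
Record partial_aggregation (R : numDomainType) (I : mcnd R) := PAgg {
  bidx : finType;
  Kb : bidx -> {set comm I};
  Dis : bidx -> node I -> node I -> {set comm I};
  Kb_nonempty : forall b, Kb b != set0;
  Kb_common_origin : forall b k k', k \in Kb b -> k' \in Kb b -> orig k = orig k';
  Dis_sub : forall b i j, Dis b i j \subset Kb b;
  Kb_partition : forall k, exists! b, k \in Kb b }.

Section Formulations.
Variables (R : numDomainType) (I : mcnd R) (B : partial_aggregation I).

Local Notation N := (node I).
Local Notation K := (comm I).

Definition Kagg (b : bidx B) (i j : N) : {set K} := Kb b :\: Dis b i j.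

Definition Gfam (b : bidx B) (i j : N) : {set {set K}} :=
  (if Kagg b i j != set0 then [set Kagg b i j] else set0)
  :|: [set [set k] | k in Dis b i j].

Definition os (i : N) (k : K) : R :=
  (orig k == i)%:R - (dest k == i)%:R.

(* Variables: x i j D = x_{ij}^D (meaningful for arc i j and D in Gfam b i j),
   y i j = y_{ij}. *)
Definition PA_obj (x : N -> N -> {set K} -> R) (y : N -> N -> R) : R :=
  \sum_(i : N) \sum_(j : N | arc i j)
     (ccost i j * \sum_(b : bidx B) \sum_(D in Gfam b i j) x i j D)
  + \sum_(i : N) \sum_(j : N | arc i j) fcost i j * y i j.

Definition PA_feas (x : N -> N -> {set K} -> R) (y : N -> N -> R) : Prop :=
  (forall i j, arc i j -> forall b, forall D, D \in Gfam b i j -> 0 <= x i j D)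
  /\ (forall i j, arc i j -> 0 <= y i j /\ y i j <= 1)
  /\ (forall b i,
        \sum_(j : N | arc i j) \sum_(D in Gfam b i j) x i j D
        - \sum_(j : N | arc j i) \sum_(D in Gfam b j i) x j i D
        = \sum_(k in Kb b) os i k * dem k)
  /\ (forall i j, arc i j ->
        \sum_(b : bidx B) \sum_(D in Gfam b i j) x i j D <= cap i j * y i j)
  /\ (forall i j, arc i j -> forall b, forall D, D \in Gfam b i j ->
        x i j D <= (\sum_(k in D) dem k) * y i j).

Definition PAi_feas (x : N -> N -> {set K} -> R) (y : N -> N -> R) : Prop :=
  PA_feas x y
  /\ (forall b, forall k, k \in Kb b -> forall i,
        \sum_(j : N | arc i j) \sum_(D in Gfam b i j | k \in D) x i j D
        - \sum_(j : N | arc j i) \sum_(D in Gfam b j i | D == [set k]) x j i D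
        >= os i k * dem k)
  /\ (forall b, forall k, k \in Kb b -> forall i,
        \sum_(j : N | arc i j) \sum_(D in Gfam b i j | D == [set k]) x i j D
        - \sum_(j : N | arc j i) \sum_(D in Gfam b j i | k \in D) x j i D
        <= os i k * dem k).

Definition Lset (b : bidx B) (i : N) : {set K} :=
  [set k in Kb b | [exists j, arc j i && (k \in Dis b j i)]
                   || [exists j, arc i j && (k \in Dis b i j)]].

Definition Mfam (b : bidx B) (i : N) : {set {set K}} :=
  [set [set k] | k in Lset b i]
  :|: (if Kb b :\: Lset b i != set0 then [set Kb b :\: Lset b i] else set0).

Definition Tin (b : bidx B) (i : N) : {set {set K}} :=
  [set Kagg b j i | j in [pred j | arc j i && (Kagg b j i != set0)]].
Definition Tout (b : bidx B) (i : N) : {set {set K}} :=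
  [set Kagg b i j | j in [pred j | arc i j && (Kagg b i j != set0)]].

(* Extra variables: zin b i C D = z_{CD}^{ib} (C in Tin, D in Mfam),
   zout b i D C = z_{DC}^{ib} (D in Mfam, C in Tout). *)
Definition PAe_feas (x : N -> N -> {set K} -> R) (y : N -> N -> R)
    (zin : bidx B -> N -> {set K} -> {set K} -> R)
    (zout : bidx B -> N -> {set K} -> {set K} -> R) : Prop :=
  PA_feas x y
  /\ (forall b i, Lset b i != set0 ->
       (forall C D, C \in Tin b i -> D \in Mfam b i -> ~~ [disjoint C & D] ->
          0 <= zin b i C D)
       /\ (forall D C, D \in Mfam b i -> C \in Tout b i -> ~~ [disjoint C & D] ->
          0 <= zout b i D C)
       /\ (forall D, D \in Mfam b i ->
            \sum_(j : N | arc i j && [exists k, (D == [set k]) && (k \in Dis b i j)])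
                x i j D
            - \sum_(j : N | arc j i && [exists k, (D == [set k]) && (k \in Dis b j i)])
                x j i D
            + \sum_(C in Tout b i | ~~ [disjoint C & D]) zout b i D C
            - \sum_(C in Tin b i | ~~ [disjoint C & D]) zin b i C D
            = \sum_(k in D) os i k * dem k)
       /\ (forall C, C \in Tin b i ->
            \sum_(D in Mfam b i | ~~ [disjoint C & D]) zin b i C D
            - \sum_(j : N | arc j i && (Kagg b j i == C)) x j i C = 0)
       /\ (forall C, C \in Tout b i ->
            \sum_(j : N | arc i j && (Kagg b i j == C)) x i j C
            - \sum_(D in Mfam b i | ~~ [disjoint C & D]) zout b i D C = 0)).

Definition PAe_obj (x : N -> N -> {set K} -> R) (y : N -> N -> R)
    (zin zout : bidx B -> N -> {set K} -> {set K} -> R) : R := PA_obj x y.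

Definition PAi_obj (x : N -> N -> {set K} -> R) (y : N -> N -> R) : R := PA_obj x y.

End Formulations.

(* Main.v *)
From Pilot Require Import Defs.
From HB Require Import structures.
From mathcomp Require Import all_boot all_order all_algebra.
From mathcomp Require Import reals.
From mathcomp Require Import lra.
Import Pilot.Defs.
Set Implicit Arguments. Unset Strict Implicit. Unset Printing Implicit Defensive.
Import Order.TTheory GRing.Theory Num.Theory.
Local Open Scope ring_scope.

Lemma meetP (T : finType) (A B : {set T}) (a : T) :
  a \in A -> a \in B -> ~~ [disjoint A & B].
Proof. by move=> hA hB; apply/negP => H; move: (disjointFr H hA); rewrite hB. Qed.

Lemma meet1 (T : finType) (C : {set T}) (k : T) :
  ~~ [disjoint C & [set k]] = (k \in C).
Proof. by rewrite disjoint_sym disjoints1 negbK. Qed.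

Lemma Gsum (R : realType) (I : mcnd R) (B : partial_aggregation I) (b : bidx B) i j
  (P : pred {set comm I}) (F : {set comm I} -> R) :
  \sum_(D in Gfam b i j | P D) F D =
  (if (Kagg b i j != set0) && P (Kagg b i j) then F (Kagg b i j) else 0)
  + \sum_(k in Dis b i j | P [set k]) F [set k].
Proof.
rewrite /Gfam big_mkcondr.
have hd : [disjoint (if Kagg b i j != set0 then [set Kagg b i j] else set0)
            & [set [set k] | k in Dis b i j]].
  case: ifP => _; last by apply/pred0P => D; rewrite !inE.
  rewrite disjoints1; apply/imsetP => -[k kD /= eK].
  by move: (set11 k); rewrite -eK /Kagg inE kD.
set A := (if _ then _ else _) in hd *; set S := imset _ _ in hd *.
rewrite (eq_bigl [predU A & S]); last by move=> D; rewrite !inE.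
rewrite bigU //; congr (_ + _).
  rewrite /A; case: ifP => hK /=; last by rewrite big_set0.
  by rewrite big_set1.
rewrite big_imset /=; last by move=> u v _ _; apply: set1_inj.
by rewrite -big_mkcondr.
Qed.

Lemma Gsum_in (R : realType) (I : mcnd R) (B : partial_aggregation I) (b : bidx B) i j k
  (F : {set comm I} -> R) :
  \sum_(D in Gfam b i j | k \in D) F D =
  (if k \in Kagg b i j then F (Kagg b i j) else 0)
  + (if k \in Dis b i j then F [set k] else 0).
Proof.
rewrite Gsum; congr (_ + _).
  case: (boolP (k \in Kagg b i j)) => hk; rewrite ?andbT ?andbF //.
  by rewrite ifT //; apply/set0Pn; exists k.
rewrite (eq_bigl (fun k' => (k' \in Dis b i j) && (k' == k))); last first.
  by move=> k'; rewrite inE eq_sym.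
rewrite big_andbC big_mkcondr /= big_pred1_eq //.
Qed.

Lemma Gsum_eq1 (R : realType) (I : mcnd R) (B : partial_aggregation I) (b : bidx B) i j k
  (F : {set comm I} -> R) :
  \sum_(D in Gfam b i j | D == [set k]) F D =
  (if Kagg b i j == [set k] then F (Kagg b i j) else 0)
  + (if k \in Dis b i j then F [set k] else 0).
Proof.
rewrite Gsum; congr (_ + _).
  case: (boolP (Kagg b i j == [set k])) => hk; rewrite ?andbT ?andbF //.
  by rewrite ifT // (eqP hk); apply/set0Pn; exists k; rewrite inE.
rewrite (eq_bigl (fun k' => (k' \in Dis b i j) && (k' == k))); last first.
  by move=> k'; rewrite (inj_eq set1_inj).
rewrite big_andbC big_mkcondr /= big_pred1_eq //.
Qed.

Lemma Gsum_all (R : realType) (I : mcnd R) (B : partial_aggregation I) (b : bidx B) i j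
  (F : {set comm I} -> R) :
  \sum_(D in Gfam b i j) F D =
  (if Kagg b i j != set0 then F (Kagg b i j) else 0)
  + \sum_(k in Dis b i j) F [set k].
Proof.
have := Gsum b i j xpredT F; rewrite andbT => e.
rewrite (eq_bigl (fun D => (D \in Gfam b i j) && xpredT D)); last by move=> D; rewrite andbT.
by rewrite e; congr (_ + _); apply: eq_bigl => k; rewrite andbT.
Qed.

Lemma sum_split_if (R : realType) (N : finType) (a c1 c2 : pred N) (f1 f2 : N -> R) :
  \sum_(j | a j) ((if c1 j then f1 j else 0) + (if c2 j then f2 j else 0)) =
  \sum_(j | a j && c1 j) f1 j + \sum_(j | a j && c2 j) f2 j.
Proof. by rewrite big_split /= !big_mkcondr. Qed.

Lemma sum_sub_le (R : realType) (I : finType) (P Q : pred I) (F : I -> R) :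
  (forall i, P i -> Q i) -> (forall i, Q i -> ~~ P i -> 0 <= F i) ->
  \sum_(i | P i) F i <= \sum_(i | Q i) F i.
Proof.
move=> hPQ hF; rewrite [X in _ <= X](bigID P) /=.
rewrite (eq_bigl P); last first.
  by move=> i; case: (boolP (P i)) => h; rewrite ?andbT ?andbF // hPQ.
rewrite lerDl; apply: sumr_ge0 => i /andP[hq hp]; exact: hF.
Qed.

Lemma side_bounds (R : realType) (N K : finType) (a : pred N) (p : N -> {set K})
  (f : N -> {set K} -> R) (T M : {set {set K}}) (Dk : {set K}) (k : K)
  (w : {set K} -> {set K} -> R) :
  (forall j, a j -> p j != set0 -> p j \in T) ->
  (forall C, C \in T -> \sum_(j | a j && (p j == C)) f j C
                         = \sum_(D in M | ~~ [disjoint C & D]) w D C) ->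
  (forall D C, D \in M -> C \in T -> ~~ [disjoint C & D] -> 0 <= w D C) ->
  Dk \in M ->
  (forall D, D \in M -> (k \in D) = (D == Dk)) ->
  (forall C, C \in T -> ~~ [disjoint C & Dk] = (k \in C)) ->
  0 <= \sum_(C in T | ~~ [disjoint C & Dk]) w Dk C
  /\ \sum_(C in T | ~~ [disjoint C & Dk]) w Dk C <= \sum_(j | a j && (k \in p j)) f j (p j)
  /\ \sum_(j | a j && (p j == [set k])) f j (p j) <= \sum_(C in T | ~~ [disjoint C & Dk]) w Dk C.
Proof.
move=> hT hTc hw hDk hM hmeet.
have eZ : \sum_(C in T | ~~ [disjoint C & Dk]) w Dk C
        = \sum_(C | (C \in T) && (k \in C)) w Dk C.
  by apply: eq_bigl => C; case hC: (C \in T) => //=; rewrite hmeet.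
split; first by apply: sumr_ge0 => C /andP[hC hm]; apply: hw.
split.
  rewrite (partition_big p (fun C => (C \in T) && (k \in C))) /=; last first.
    by move=> j /andP[aj kj]; rewrite kj andbT hT //; apply/set0Pn; exists k.
  rewrite eZ; apply: ler_sum => C /andP[hC kC].
  rewrite (eq_bigr (fun j => f j C)); last by move=> j /andP[_ /eqP ->].
  rewrite (eq_bigl (fun j => a j && (p j == C))); last first.
    by move=> j; case: (p j =P C) => [->|]; rewrite ?kC ?andbT ?andbF.
  rewrite hTc //.
  have -> : w Dk C = \sum_(D | D == Dk) w D C by rewrite big_pred1_eq.
  apply: sum_sub_le => [D /eqP ->|D /andP[hD hm] _]; last exact: hw.
  by rewrite hDk /= hmeet.
rewrite (partition_big p (fun C => (C \in T) && (C == [set k]))) /=; last first.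
  move=> j /andP[aj /eqP e]; rewrite e eqxx andbT -e hT //.
  by rewrite e; apply/set0Pn; exists k; rewrite inE.
apply: (@le_trans _ _ (\sum_(C | (C \in T) && (C == [set k])) w Dk C)).
  apply: ler_sum => C /andP[hC /eqP eC].
  rewrite (eq_bigr (fun j => f j C)); last by move=> j /andP[_ /eqP ->].
  rewrite (eq_bigl (fun j => a j && (p j == C))); last first.
    by move=> j; case: (p j =P C) => [->|]; rewrite ?eC ?eqxx ?andbT ?andbF.
  rewrite hTc // (eq_bigl (fun D => D == Dk)) ?big_pred1_eq //.
  move=> D; rewrite eC; case: (boolP (D \in M)) => hD /=.
    by rewrite disjoints1 negbK hM.
  by apply/esym/eqP => e; rewrite e hDk in hD.
rewrite eZ; apply: sum_sub_le => [C /andP[hC /eqP eC]|C /andP[hC hm] _].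
  by rewrite hC eC set11.
by apply: hw => //; rewrite hmeet.
Qed.

Lemma core (R : realType) (K : finType) (os d : K -> R) (Dk : {set K}) (k : K)
  (SOd SId AO AI SOa SIa ZO ZI : R) :
  k \in Dk -> (forall k', k' \in Dk -> 0 <= d k') ->
  ((forall k', k' \in Dk -> 0 <= os k') \/ (forall k', k' \in Dk -> os k' <= 0)) ->
  ZO <= AO -> ZI <= AI -> SOa <= ZO -> SIa <= ZI -> 0 <= ZO -> 0 <= ZI ->
  SOd - SId + ZO - ZI = \sum_(k' in Dk) os k' * d k' ->
  Dk = [set k] \/ (SOd = 0 /\ SId = 0 /\ SOa = 0 /\ SIa = 0) ->
  os k * d k <= SOd + AO - (SId + SIa) /\ SOd + SOa - (SId + AI) <= os k * d k.
Proof.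
move=> kD hd hs h1 h2 h3 h4 h5 h6 he [eD|[e1 [e2 [e3 e4]]]].
  by rewrite eD big_set1 in he; split; lra.
subst; case: hs => hs.
  have hS : os k * d k <= \sum_(k' in Dk) os k' * d k'.
    rewrite (bigD1 k) //= lerDl; apply: sumr_ge0 => k' /andP[hk' _].
    by apply: mulr_ge0; [apply: hs|apply: hd].
  have hk : 0 <= os k * d k by apply: mulr_ge0; [apply: hs|apply: hd].
  by split; lra.
have hS : \sum_(k' in Dk) os k' * d k' <= os k * d k.
  rewrite (bigD1 k) //= gerDl; apply: sumr_le0 => k' /andP[hk' _].
  by apply: mulr_le0_ge0; [apply: hs|apply: hd].
have hk : os k * d k <= 0 by apply: mulr_le0_ge0; [apply: hs|apply: hd].
by split; lra.
Qed.

Section Aux.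
End Aux.

Lemma inL_out (R : realType) (I : mcnd R) (B : partial_aggregation I) (b : bidx B) i j k' :
  arc i j -> k' \in Dis b i j -> k' \in Lset b i.
Proof.
move=> aij hk; rewrite /Lset inE (subsetP (Dis_sub b i j) _ hk) /=.
by apply/orP; right; apply/existsP; exists j; rewrite aij hk.
Qed.

Lemma inL_in (R : realType) (I : mcnd R) (B : partial_aggregation I) (b : bidx B) i j k' :
  arc j i -> k' \in Dis b j i -> k' \in Lset b i.
Proof.
move=> aij hk; rewrite /Lset inE (subsetP (Dis_sub b j i) _ hk) /=.
by apply/orP; left; apply/existsP; exists j; rewrite aij hk.
Qed.

Lemma Kagg_in_G (R : realType) (I : mcnd R) (B : partial_aggregation I) (b : bidx B) i j :
  Kagg b i j != set0 -> Kagg b i j \in Gfam b i j.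
Proof. by move=> h; rewrite /Gfam inE h inE eqxx. Qed.

Lemma sign_os (R : realType) (I : mcnd R) (B : partial_aggregation I) (b : bidx B) i k :
  k \in Kb b ->
  (forall k', k' \in Kb b -> 0 <= os i k') \/ (forall k', k' \in Kb b -> os i k' <= 0).
Proof.
move=> kb; case: (orig k =P i) => e; [left|right] => k' hk';
  rewrite /os -(Kb_common_origin kb hk').
  by rewrite e eqxx; case: (dest k' == i) => /=; rewrite ?subrr ?subr0 ?ler01.
by move/eqP/negbTE: e => ->; rewrite sub0r oppr_le0 ler0n.
Qed.

Lemma single_sum (R : realType) (N K : finType) (a : pred N) (ds : N -> {set K})
  (f : N -> {set K} -> R) (Kbb L Dk : {set K}) (k : K) :
  (forall j k', a j -> k' \in ds j -> k' \in L) ->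
  Dk = (if k \in L then [set k] else Kbb :\: L) ->
  \sum_(j | a j && [exists k0, (Dk == [set k0]) && (k0 \in ds j)]) f j Dk
  = \sum_(j | a j && (k \in ds j)) f j [set k].
Proof.
move=> hL; case: ifP => kL ->.
  apply: eq_bigl => j; congr (_ && _).
  apply/existsP/idP => [[k0 /andP[/eqP/set1_inj -> h]] | h]; first exact: h.
  by exists k; rewrite eqxx h.
transitivity (0 : R); first apply: big_pred0.
  move=> j; case aj: (a j) => //=; apply/existsP => -[k0 /andP[/eqP e h]].
  by move: (set11 k0); rewrite -e inE (hL j k0 aj h).
symmetry; apply: big_pred0 => j; case aj: (a j) => //=.
by apply/negP => h; rewrite (hL j k aj h) in kL.
Qed.

Lemma meet_side (K : finType) (Kbb L : {set K}) (T : {set {set K}}) (k : K) (Dk : {set K}) :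
  k \in Kbb -> Dk = (if k \in L then [set k] else Kbb :\: L) ->
  (forall C, C \in T -> exists2 ds : {set K}, C = Kbb :\: ds & (k \notin L -> k \notin ds)) ->
  forall C, C \in T -> ~~ [disjoint C & Dk] = (k \in C).
Proof.
move=> kb eDk hT C hC; case: (hT C hC) => ds -> hds.
move: eDk; case: ifP => kL ->; first exact: meet1.
have kC : k \in Kbb :\: ds by rewrite inE kb (hds (negbT kL)).
by rewrite kC; apply: (meetP kC); rewrite inE kL kb.
Qed.

Lemma M_props (R : realType) (I : mcnd R) (B : partial_aggregation I) (b : bidx B) i k (Dk : {set comm I}) :
  k \in Kb b -> Dk = (if k \in Lset b i then [set k] else Kb b :\: Lset b i) ->
  Dk \in Mfam b i /\ forall D, D \in Mfam b i -> (k \in D) = (D == Dk).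
Proof.
move=> kb ->; split.
  case: ifP => kL; rewrite /Mfam inE.
    by apply/orP; left; apply/imsetP; exists k.
  have hne : Kb b :\: Lset b i != set0 by apply/set0Pn; exists k; rewrite in_setD kL kb.
  by rewrite hne inE eqxx orbT.
move=> D; rewrite /Mfam inE => /orP[/imsetP[k' hk' ->]|].
  rewrite inE; case: ifP => kL; first by rewrite (inj_eq set1_inj) eq_sym.
  have -> : (k == k') = false by apply/negbTE/eqP => e; rewrite e hk' in kL.
  apply/esym/negbTE/eqP => e; move: (set11 k'); rewrite e in_setD hk'.
  by [].
case: ifP => hne; last by rewrite inE.
rewrite inE => /eqP ->; case: ifP => kL.
  rewrite in_setD kL /=; apply/esym/negbTE/eqP => e.
  by move: (set11 k); rewrite -e in_setD kL.
by rewrite eqxx in_setD kL kb.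
Qed.

Lemma PAi_node (R : realType) (I : mcnd R) (B : partial_aggregation I)
  (x : node I -> node I -> {set comm I} -> R) (y : node I -> node I -> R)
  (zin zout : bidx B -> node I -> {set comm I} -> {set comm I} -> R)
  (b : bidx B) k i :
  PAe_feas x y zin zout -> k \in Kb b ->
  os i k * dem k <=
    \sum_(j | arc i j && (k \in Dis b i j)) x i j [set k]
    + \sum_(j | arc i j && (k \in Kagg b i j)) x i j (Kagg b i j)
    - (\sum_(j | arc j i && (k \in Dis b j i)) x j i [set k]
       + \sum_(j | arc j i && (Kagg b j i == [set k])) x j i (Kagg b j i))
  /\
    \sum_(j | arc i j && (k \in Dis b i j)) x i j [set k]
    + \sum_(j | arc i j && (Kagg b i j == [set k])) x i j (Kagg b i j)
    - (\sum_(j | arc j i && (k \in Dis b j i)) x j i [set k]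
       + \sum_(j | arc j i && (k \in Kagg b j i)) x j i (Kagg b j i))
  <= os i k * dem k.
Proof.
move=> [[hx [hy [hcons [hcap hub]]]] hz] kb.
have hsg := sign_os i kb.
have hdem : forall k', k' \in Kb b -> 0 <= dem k' by move=> k' _; apply: dem_ge0.
case: (boolP (Lset b i == set0)) => hL.
  have hDo : forall j, arc i j -> Dis b i j = set0.
    move=> j aij; apply/setP => k'; rewrite inE; apply/negP => h.
    by move: (inL_out aij h); rewrite (eqP hL) inE.
  have hDi : forall j, arc j i -> Dis b j i = set0.
    move=> j aij; apply/setP => k'; rewrite inE; apply/negP => h.
    by move: (inL_in aij h); rewrite (eqP hL) inE.
  have hKo : forall j, arc i j -> Kagg b i j = Kb b by move=> j aij; rewrite /Kagg hDo // setD0.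
  have hKi : forall j, arc j i -> Kagg b j i = Kb b by move=> j aij; rewrite /Kagg hDi // setD0.
  have eSOd : \sum_(j | arc i j && (k \in Dis b i j)) x i j [set k] = 0.
    by apply: big_pred0 => j; case aij: (arc i j) => //=; rewrite hDo // inE.
  have eSId : \sum_(j | arc j i && (k \in Dis b j i)) x j i [set k] = 0.
    by apply: big_pred0 => j; case aij: (arc j i) => //=; rewrite hDi // inE.
  have eAO : \sum_(j | arc i j && (k \in Kagg b i j)) x i j (Kagg b i j)
             = \sum_(j | arc i j) x i j (Kb b).
    apply: eq_big => [j|j /andP[aij _]]; last by rewrite hKo.
    by case aij: (arc i j) => //=; rewrite hKo.
  have eAI : \sum_(j | arc j i && (k \in Kagg b j i)) x j i (Kagg b j i)
             = \sum_(j | arc j i) x j i (Kb b).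
    apply: eq_big => [j|j /andP[aij _]]; last by rewrite hKi.
    by case aij: (arc j i) => //=; rewrite hKi.
  have hKG : forall j, arc i j -> 0 <= x i j (Kb b).
    move=> j aij; apply: (hx i j aij b); rewrite -(hKo j aij); apply: Kagg_in_G.
    by rewrite hKo // Kb_nonempty.
  have hKG' : forall j, arc j i -> 0 <= x j i (Kb b).
    move=> j aij; apply: (hx j i aij b); rewrite -(hKi j aij); apply: Kagg_in_G.
    by rewrite hKi // Kb_nonempty.
  have hSOa : \sum_(j | arc i j && (Kagg b i j == [set k])) x i j (Kagg b i j)
              <= \sum_(j | arc i j) x i j (Kb b).
    rewrite (eq_bigr (fun j => x i j (Kb b))); last by move=> j /andP[aij _]; rewrite hKo.
    by apply: sum_sub_le => [j /andP[]//|j aij _]; apply: hKG.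
  have hSIa : \sum_(j | arc j i && (Kagg b j i == [set k])) x j i (Kagg b j i)
              <= \sum_(j | arc j i) x j i (Kb b).
    rewrite (eq_bigr (fun j => x j i (Kb b))); last by move=> j /andP[aij _]; rewrite hKi.
    by apply: sum_sub_le => [j /andP[]//|j aij _]; apply: hKG'.
  have heq : \sum_(j | arc i j && (k \in Dis b i j)) x i j [set k]
           - \sum_(j | arc j i && (k \in Dis b j i)) x j i [set k]
           + \sum_(j | arc i j) x i j (Kb b) - \sum_(j | arc j i) x j i (Kb b)
           = \sum_(k' in Kb b) os i k' * dem k'.
    rewrite eSOd eSId subrr add0r -(hcons b i).
    congr (_ - _); apply: eq_bigr => j aij.
      by rewrite Gsum_all hKo // Kb_nonempty /= hDo // big_set0 addr0.
    by rewrite Gsum_all hKi // Kb_nonempty /= hDi // big_set0 addr0.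
  have hdisj : Kb b = [set k] \/
     (\sum_(j | arc i j && (k \in Dis b i j)) x i j [set k] = 0
      /\ \sum_(j | arc j i && (k \in Dis b j i)) x j i [set k] = 0
      /\ \sum_(j | arc i j && (Kagg b i j == [set k])) x i j (Kagg b i j) = 0
      /\ \sum_(j | arc j i && (Kagg b j i == [set k])) x j i (Kagg b j i) = 0).
    case: (Kb b =P [set k]) => e; [by left|right].
    split; first by []. split; first by [].
    split; apply: big_pred0 => j.
      by case aij: (arc i j) => //=; rewrite hKo //; apply/eqP.
    by case aij: (arc j i) => //=; rewrite hKi //; apply/eqP.
  rewrite eAO eAI.
  apply: (core kb hdem hsg (lexx _) (lexx _) hSOa hSIa _ _ heq hdisj).
    by apply: sumr_ge0 => j; apply: hKG.
  by apply: sumr_ge0 => j; apply: hKG'.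
set Dk := if k \in Lset b i then [set k] else Kb b :\: Lset b i.
have eDk : Dk = (if k \in Lset b i then [set k] else Kb b :\: Lset b i) by [].
have [hDkM hMu] := M_props kb eDk.
have [hzi [hzo [hMc [hTi hTo]]]] := hz b i hL.
have hmo : forall C, C \in Tout b i -> ~~ [disjoint C & Dk] = (k \in C).
  apply: (meet_side kb eDk) => C /imsetP[j]; rewrite inE => /andP[aij _] ->.
  by exists (Dis b i j) => //; apply: contra => h; exact: inL_out aij h.
have hmi : forall C, C \in Tin b i -> ~~ [disjoint C & Dk] = (k \in C).
  apply: (meet_side kb eDk) => C /imsetP[j]; rewrite inE => /andP[aij _] ->.
  by exists (Dis b j i) => //; apply: contra => h; exact: inL_in aij h.
have hTo1 : forall j, arc i j -> Kagg b i j != set0 -> Kagg b i j \in Tout b i.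
  by move=> j aij h; apply/imsetP; exists j => //; rewrite inE aij h.
have hTi1 : forall j, arc j i -> Kagg b j i != set0 -> Kagg b j i \in Tin b i.
  by move=> j aij h; apply/imsetP; exists j => //; rewrite inE aij h.
have hTo2 : forall C, C \in Tout b i ->
   \sum_(j | arc i j && (Kagg b i j == C)) x i j C
   = \sum_(D in Mfam b i | ~~ [disjoint C & D]) zout b i D C.
  by move=> C hC; apply/eqP; rewrite -subr_eq0; apply/eqP; apply: hTo.
have hTi2 : forall C, C \in Tin b i ->
   \sum_(j | arc j i && (Kagg b j i == C)) x j i C
   = \sum_(D in Mfam b i | ~~ [disjoint C & D]) zin b i C D.
  by move=> C hC; apply/esym/eqP; rewrite -subr_eq0; apply/eqP; apply: hTi.
have [hZO [hAO hSOa]] := side_bounds (a := arc i) (p := fun j => Kagg b i j) (f := x i)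
   (T := Tout b i) (M := Mfam b i) (Dk := Dk) (k := k) (w := zout b i)
   hTo1 hTo2 hzo hDkM hMu hmo.
have [hZI [hAI hSIa]] := side_bounds (a := fun j => arc j i) (p := fun j => Kagg b j i)
   (f := fun j => x j i)
   (T := Tin b i) (M := Mfam b i) (Dk := Dk) (k := k) (w := fun D C => zin b i C D)
   hTi1 hTi2 (fun D C hD hC hm => hzi C D hC hD hm) hDkM hMu hmi.
have heq := hMc Dk hDkM.
rewrite (@single_sum _ _ _ (arc i) (Dis b i) (x i) (Kb b) (Lset b i) Dk k _ eDk) in heq; last first.
  by move=> j k' aij h; apply: inL_out aij h.
rewrite (@single_sum _ _ _ (fun j => arc j i) (fun j => Dis b j i) (fun j => x j i) (Kb b) (Lset b i) Dk k _ eDk) in heq; last first.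
  by move=> j k' aij h; apply: inL_in aij h.
have hdisj : Dk = [set k] \/
     (\sum_(j | arc i j && (k \in Dis b i j)) x i j [set k] = 0
      /\ \sum_(j | arc j i && (k \in Dis b j i)) x j i [set k] = 0
      /\ \sum_(j | arc i j && (Kagg b i j == [set k])) x i j (Kagg b i j) = 0
      /\ \sum_(j | arc j i && (Kagg b j i == [set k])) x j i (Kagg b j i) = 0).
  case: (Dk =P [set k]) => eDk1; [by left|right].
  have kL : k \notin Lset b i by apply/negP => kL; apply: eDk1; rewrite eDk kL.
  have single : forall C, C != set0 -> (forall k', k' \in Kb b -> k' \notin Lset b i -> k' \in C) ->
      C = [set k] -> False.
    move=> C _ hC eC; apply: eDk1; rewrite eDk (negbTE kL).
    apply/eqP; rewrite eqEsubset; apply/andP; split; last by rewrite sub1set in_setD kL kb.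
    apply/subsetP => k'; rewrite in_setD => /andP[nk'L k'b].
    by rewrite -eC; apply: hC.
  split; [|split; [|split]].
  - apply: big_pred0 => j; case aij: (arc i j) => //=.
    by apply/negP => h; rewrite (inL_out aij h) in kL.
  - apply: big_pred0 => j; case aij: (arc j i) => //=.
    by apply/negP => h; rewrite (inL_in aij h) in kL.
  - apply: big_pred0 => j; case aij: (arc i j) => //=.
    apply/negP => /eqP eK; apply: (single _ _ _ eK).
      by rewrite eK; apply/set0Pn; exists k; rewrite inE.
    move=> k' k'b nk'L; rewrite /Kagg in_setD k'b andbT.
    by apply/negP => h; rewrite (inL_out aij h) in nk'L.
  - apply: big_pred0 => j; case aij: (arc j i) => //=.
    apply/negP => /eqP eK; apply: (single _ _ _ eK).
      by rewrite eK; apply/set0Pn; exists k; rewrite inE.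
    move=> k' k'b nk'L; rewrite /Kagg in_setD k'b andbT.
    by apply/negP => h; rewrite (inL_in aij h) in nk'L.
have hDsub : forall k', k' \in Dk -> k' \in Kb b.
  move=> k'; rewrite eDk; case: ifP => kL; last by rewrite in_setD => /andP[].
  by rewrite inE => /eqP ->.
have kDk : k \in Dk by rewrite eDk; case: ifP => kL; [rewrite set11 | rewrite in_setD kL kb].
have hsg' : (forall k', k' \in Dk -> 0 <= os i k') \/ (forall k', k' \in Dk -> os i k' <= 0).
  by case: hsg => h; [left|right] => k' hk'; apply: h; apply: hDsub.
have := core kDk (fun k' _ => dem_ge0 k') hsg' hAO hAI hSOa hSIa hZO hZI heq hdisj.
by [].
Qed.

Lemma part1 (R : realType) (I : mcnd R) (B : partial_aggregation I)
  (x : node I -> node I -> {set comm I} -> R) (y : node I -> node I -> R)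
  (zin zout : bidx B -> node I -> {set comm I} -> {set comm I} -> R) :
  PAe_feas x y zin zout -> PAi_feas B x y.
Proof.
move=> H; split; first exact: H.1.
split=> b k kb i; have [h1 h2] := PAi_node i H kb.
  rewrite (eq_bigr _ (fun j _ => Gsum_in b i j k (x i j))) sum_split_if.
  rewrite (eq_bigr _ (fun j _ => Gsum_eq1 b j i k (x j i))) sum_split_if.
  lra.
rewrite (eq_bigr _ (fun j _ => Gsum_eq1 b i j k (x i j))) sum_split_if.
rewrite (eq_bigr _ (fun j _ => Gsum_in b j i k (x j i))) sum_split_if.
lra.
Qed.

Definition S1 : {set 'I_4} := [set k : 'I_4 | (k < 2)%N].
Definition dis2 (i : 'I_2) : {set 'I_4} := if i == ord0 then ~: S1 else S1.
Definition i1 : 'I_2 := @Ordinal 2 1 isT.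

Definition I0 (R : realType) : mcnd R :=
  @Mcnd R 'I_2 'I_4 (fun a b => a != b) (fun _ => ord0) (fun _ => ord0)
    (fun _ => 1) (fun _ _ => 1) (fun _ _ => 0) (fun _ _ => 0)
    (fun _ => ler01) (fun _ _ _ => ler01) (fun _ _ _ => lexx 0) (fun _ _ _ => lexx 0).

Lemma setT4_ne0 : [set: 'I_4] != set0.
Proof. by apply/set0Pn; exists ord0; rewrite inE. Qed.

Lemma part_unit (k : 'I_4) : exists! b : unit, k \in [set: 'I_4].
Proof. by exists tt; split; [rewrite inE | case]. Qed.

Definition B0 (R : realType) : partial_aggregation (I0 R) :=
  @PAgg R (I0 R) unit (fun _ => [set: 'I_4]) (fun _ i _ => dis2 i)
    (fun _ => setT4_ne0) (fun _ _ _ _ _ => erefl) (fun _ _ _ => subsetT _) part_unit.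

Definition x0 (R : realType) (i j : 'I_2) (D : {set 'I_4}) : R :=
  (D == [set: 'I_4] :\: dis2 i)%:R.

Lemma agg_ne0 i : [set: 'I_4] :\: dis2 i != set0.
Proof.
rewrite /dis2; case: ifP => _; apply/set0Pn.
  by exists ord0; rewrite !inE.
by exists ord_max; rewrite !inE.
Qed.

Lemma notsingle i (k : 'I_4) : ([set k] == [set: 'I_4] :\: dis2 i) = false.
Proof.
apply/negbTE/eqP => e.
have [e1 [e2 [h1 [h2 ne]]]] : exists e1 e2 : 'I_4,
    e1 \in [set: 'I_4] :\: dis2 i /\ e2 \in [set: 'I_4] :\: dis2 i /\ e1 != e2.
  rewrite /dis2; case: ifP => _.
    by exists ord0, (@Ordinal 4 1 isT); rewrite !inE.
  by exists ord_max, (@Ordinal 4 2 isT); rewrite !inE.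
rewrite -e !inE in h1 h2.
by rewrite (eqP h1) (eqP h2) eqxx in ne.
Qed.

Lemma os0 (R : realType) (i : 'I_2) (k : 'I_4) : @os R (I0 R) i k = 0.
Proof. by rewrite /os subrr. Qed.

Lemma inner1 (R : realType) (b : unit) (i j : 'I_2) :
  \sum_(D in @Gfam R (I0 R) (B0 R) b i j) x0 R i j D = 1.
Proof.
rewrite Gsum_all.
have -> : Kagg (B:=B0 R) b i j = [set: 'I_4] :\: dis2 i by [].
rewrite agg_ne0 /x0 eqxx big1 ?addr0 // => k _.
by rewrite notsingle.
Qed.

Lemma feasPAi (R : realType) : PAi_feas (B0 R) (x0 R) (fun _ _ => 1).
Proof.
split; [split; [|split; [|split; [|split]]]|split].
- by move=> i j _ b D _; rewrite /x0 ler0n.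
- by move=> i j _; rewrite lexx ler01.
- move=> b i; rewrite (eq_bigr (fun _ => 1)); last by move=> j _; apply: inner1.
  rewrite [X in _ - X](eq_bigr (fun _ => 1)); last by move=> j _; apply: inner1.
  rewrite [X in _ - X](eq_bigl (fun j => arc i j)); last by move=> j; rewrite /= eq_sym.
  by rewrite subrr big1 // => k _; rewrite os0 mul0r.
- move=> i j _; rewrite (eq_bigr (fun _ => 1)); last by move=> b _; apply: inner1.
  by rewrite (big_pred1 tt) // mulr1.
- move=> i j _ b D _; rewrite mulr1 /x0; case: eqP => [->|_]; last by apply: sumr_ge0.
  have /set0Pn [e he] := agg_ne0 i.
  by rewrite (bigD1 e) //= lerDl sumr_ge0.
- move=> b k _ i; rewrite os0 mul0r.
  rewrite [X in _ - X]big1 ?subr0; last first.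
    by move=> j _; apply: big1 => D /andP[_ /eqP ->]; rewrite /x0 notsingle.
  by apply: sumr_ge0 => j _; apply: sumr_ge0 => D _; rewrite /x0 ler0n.
- move=> b k _ i; rewrite os0 mul0r.
  rewrite big1 ?sub0r; last first.
    by move=> j _; apply: big1 => D /andP[_ /eqP ->]; rewrite /x0 notsingle.
  by rewrite oppr_le0; apply: sumr_ge0 => j _; apply: sumr_ge0 => D _; rewrite /x0 ler0n.
Qed.

Lemma ne_i1 (j : 'I_2) : j != i1 -> j = ord0.
Proof. by case: j => -[|[|m]] h //= _; apply/val_inj. Qed.

Lemma noPAe (R : realType) :
  ~ (exists zin zout : unit -> 'I_2 -> {set 'I_4} -> {set 'I_4} -> R,
       @PAe_feas R (I0 R) (B0 R) (x0 R) (fun _ _ => 1) zin zout).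
Proof.
move=> [zin [zout [_ hz]]].
have LT : Lset (B:=B0 R) tt i1 = [set: 'I_4].
  apply/setP => k; rewrite /Lset inE in_setT /=.
  case hk: (k \in S1).
    by apply/orP; right; apply/existsP; exists ord0.
  by apply/orP; left; apply/existsP; exists ord0; rewrite /dis2 /= ?in_setC ?hk.
have hL : Lset (B:=B0 R) tt i1 != set0 by rewrite LT setT4_ne0.
have [hzi [hzo [hMc [hTi hTo]]]] := hz tt i1 hL.
set Sa := [set: 'I_4] :\: dis2 ord0.
have hSa : Sa \in Tin (B:=B0 R) tt i1.
  by apply/imsetP; exists ord0 => //; rewrite inE /= agg_ne0.
have hTin : forall C, C \in Tin (B:=B0 R) tt i1 -> C = Sa.
  move=> C /imsetP[j]; rewrite inE => /andP[aj _] ->.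
  by rewrite (ne_i1 aj).
have hTout : forall C, C \in Tout (B:=B0 R) tt i1 -> C = [set: 'I_4] :\: S1.
  by move=> C /imsetP[j] _ ->.
have hM : forall D, D \in Mfam (B:=B0 R) tt i1 -> exists k, D = [set k].
  move=> D; rewrite /Mfam LT setDv eqxx setU0 => /imsetP[k _ ->]; by exists k.
have hz0 : forall D, D \in Mfam (B:=B0 R) tt i1 -> ~~ [disjoint Sa & D] -> zin tt i1 Sa D = 0.
  move=> D hD hm; have [k ek] := hM D hD; subst D.
  rewrite meet1 in hm.
  have := hMc _ hD.
  rewrite big1; last by move=> j _; rewrite /x0 notsingle.
  rewrite [X in _ - X + _ - _]big1; last by move=> j _; rewrite /x0 notsingle.
  rewrite [X in _ + X - _]big1; last first.
    move=> C /andP[hC hm']; exfalso; move: hm'; rewrite (hTout C hC) meet1.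
    by move: hm; rewrite /Sa /dis2 eqxx !inE ?negbK; case: (_ < _)%N.
  rewrite (eq_bigl (fun C => C == Sa)); last first.
    move=> C; case: (C =P Sa) => [->|ne]; first by rewrite hSa meet1.
    by case hC: (C \in _) => //=; rewrite (hTin C hC) in ne.
  rewrite big_pred1_eq big_set1 os0 mul0r subrr add0r sub0r => /eqP.
  by rewrite oppr_eq0 => /eqP.
have := hTi Sa hSa.
rewrite big1; last by move=> D /andP[hD hm]; apply: hz0.
rewrite (eq_bigl (fun j => j == ord0)); last first.
  move=> j; case: (j =P ord0) => [->|ne]; first by rewrite eqxx.
  have ej : j = i1.
    case: j ne => -[|[|m]] h ne //; last by apply/val_inj.
    by case: ne; apply/val_inj.
  by rewrite ej.
rewrite big_pred1_eq /x0 eqxx sub0r => /eqP; rewrite oppr_eq0 oner_eq0 //.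
Qed.

Unset Implicit Arguments.

Theorem theorem2 (R : realType) :
  (forall (I : mcnd R) (B : partial_aggregation I)
          (x : node I -> node I -> {set comm I} -> R) (y : node I -> node I -> R)
          (zin zout : bidx B -> node I -> {set comm I} -> {set comm I} -> R),
     PAe_feas x y zin zout ->
     PAi_feas B x y /\ PAe_obj x y zin zout = PAi_obj B x y)
  /\
  (exists (I : mcnd R) (B : partial_aggregation I)
          (x : node I -> node I -> {set comm I} -> R) (y : node I -> node I -> R),
     PAi_feas B x y /\
     ~ (exists zin zout : bidx B -> node I -> {set comm I} -> {set comm I} -> R,
          PAe_feas x y zin zout)).
Proof.
split.
  by move=> I B x y zin zout H; split; [exact: part1 H|].
exists (I0 R), (B0 R), (x0 R), (fun _ _ => 1); split; [exact: feasPAi|exact: noPAe].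
Qed.
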